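(* Let $I$ be a finite index set of users. For each $i \in I$ let $p_i \in [0,1]$ and $\Delta p_i \in \mathbb{R}$ with $p_i - \Delta p_i \in [0,1]$. Let $\alpha > 0$ and $\beta > 0$, and define $$J = \{ i \in I : \alpha p_i > \beta \Delta p_i \}, \qquad K = \{ i \in I : \alpha p_i < \beta \Delta p_i \}.$$ Suppose that $\sum_{j \in J} p_j = \sum_{k \in K} p_k$ and that this common value is positive. Define $$\mathscr{C}_1 = \frac{\sum_{j\in J} \beta \Delta p_j}{\sum_{j\in J} p_j}, \qquad \mathscr{C}_2 = \frac{\sum_{k\in K} \alpha p_k}{\sum_{k \in K} p_k}.$$ Then $\mathscr{C}_1 < \mathscr{C}_2$.
   Context: Interpretation (real-time bidding for online ads): each $i\in I$ indexes an ad request from a distinct user $u_i$; $p_i$ is the action rate if the advertiser's ad is shown, $p_i - \Delta p_i$ the background action rate if it is not shown, and $\Delta p_i$ the AR lift. In pure second-price auctions with no other candidates, $DSP_1$ bids $\alpha p_i$ (value-based bidding) and $DSP_2$ bids $\beta \Delta p_i$ (lift-based bidding); $DSP_1$ wins users in $J$ at cost $\beta\Delta p_j$ each, and $DSP_2$ wins users in $K$ at cost $\alpha p_k$ each. Under last-touch attribution the expected attributed actions are $\sum_J p_j$ and $\sum_K p_k$ (assumed equal). $\mathscr{C}_1,\mathscr{C}_2$ are the costs per attributed action of $DSP_1$ and $DSP_2$; the theorem says lift-based bidding costs the DSP more per attributed action. *)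

(* Defs.v *)
From mathcomp Require Import all_boot all_order all_algebra.
Set Implicit Arguments. Unset Strict Implicit. Unset Printing Implicit Defensive.
Import Order.TTheory GRing.Theory Num.Theory.
Local Open Scope ring_scope.

Definition setJ (R : realFieldType) (I : finType) (alpha beta : R) (p dp : I -> R) : {set I} :=
  [set i | beta * dp i < alpha * p i].
Definition setK (R : realFieldType) (I : finType) (alpha beta : R) (p dp : I -> R) : {set I} :=
  [set i | alpha * p i < beta * dp i].

(* Main.v *)
Require Import Defs.
From mathcomp Require Import all_boot all_order all_algebra.
Import Order.TTheory GRing.Theory Num.Theory.
Local Open Scope ring_scope.

Theorem theorem2 (R : realFieldType) (I : finType) (p dp : I -> R) (alpha beta : R)
  (hp : forall i, 0 <= p i <= 1)
  (hdp : forall i, 0 <= p i - dp i <= 1)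
  (halpha : 0 < alpha) (hbeta : 0 < beta)
  (heq : \sum_(j in setJ alpha beta p dp) p j = \sum_(k in setK alpha beta p dp) p k)
  (hpos : 0 < \sum_(j in setJ alpha beta p dp) p j) :
  (\sum_(j in setJ alpha beta p dp) beta * dp j) / (\sum_(j in setJ alpha beta p dp) p j)
  < (\sum_(k in setK alpha beta p dp) alpha * p k) / (\sum_(k in setK alpha beta p dp) p k).
Proof.
have hK : 0 < \sum_(k in setK alpha beta p dp) p k by rewrite -heq.
have -> : (\sum_(k in setK alpha beta p dp) alpha * p k) / (\sum_(k in setK alpha beta p dp) p k) = alpha.
  by rewrite -mulr_sumr mulfK // gt_eqF.
rewrite ltr_pdivrMr // mulr_sumr.
apply: ltr_sum.
  apply/hasP.
  case: (boolP [exists i, i \in setJ alpha beta p dp]) => [/existsP [i Hi]|/existsPn H]; first by exists i; rewrite ?mem_index_enum.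
  move: hpos; rewrite big1 ?ltxx // => i; by rewrite (negbTE (H i)).
by move=> i; rewrite inE.
Qed.
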